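(* There is no finite saturated Nmatrix $\mathbb{M}$ such that $\vdash_{\mathbb{M}}=\vdash_{\diamond}$.
   Context: $\vdash_\diamond$ is the single-conclusion logic of the two-valued Nmatrix $\langle\{0,1\},\cdot,\{1\}\rangle$ with one binary connective $\diamond$ (platypus) interpreted by $\diamond(0,0)=\{0\}$, $\diamond(1,1)=\{1\}$, $\diamond(0,1)=\diamond(1,0)=\{0,1\}$. For an Nmatrix $\mathbb{M}=\langle V,\cdot_{\mathbb{M}},D\rangle$, $\rhd_{\mathbb{M}}$ is its multiple-conclusion logic ($\Gamma\rhd_{\mathbb{M}}\Delta$ iff every $\mathbb{M}$-valuation with $v(\Gamma)\subseteq D$ has $v(\Delta)\cap D\neq\emptyset$) and $\vdash_{\mathbb{M}}$ its single-conclusion fragment. $\mathbb{M}$ is saturated if for every $\vdash_{\mathbb{M}}$-theory $\Gamma$ there is an $\mathbb{M}$-valuation $v$ with $v(\psi)\in D$ iff $\psi\in\Gamma$; equivalently, if $\Gamma\not\vdash_{\mathbb{M}}\psi$ for every $\psi\in\Delta$ then $\Gamma\not\rhd_{\mathbb{M}}\Delta$. *)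

(* Defs.v *)
From mathcomp Require Import all_boot.

Set Implicit Arguments.
Unset Strict Implicit.
Unset Printing Implicit Defensive.

Inductive Fm : Type :=
| Var : nat -> Fm
| Dia : Fm -> Fm -> Fm.

Definition fset := Fm -> Prop.

(* An Nmatrix <V, ._M, D> for the signature with one binary connective:
   [dia a b c] means c is in the (nonempty) set diamond_M(a, b). *)
Record Nmatrix (V : Type) := {
  dia : V -> V -> V -> Prop;
  dia_nonempty : forall a b, exists c, dia a b c;
  desig : V -> Prop
}.

Definition valuation (V : Type) (M : Nmatrix V) (v : Fm -> V) : Prop :=
  forall a b, dia M (v a) (v b) (v (Dia a b)).

Definition cons1 (V : Type) (M : Nmatrix V) (G : fset) (psi : Fm) : Prop :=
  forall v, valuation M v ->
    (forall g, G g -> desig M (v g)) -> desig M (v psi).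

Definition consm (V : Type) (M : Nmatrix V) (G D : fset) : Prop :=
  forall v, valuation M v ->
    (forall g, G g -> desig M (v g)) -> exists d, D d /\ desig M (v d).

Definition theory (V : Type) (M : Nmatrix V) (G : fset) : Prop :=
  forall psi, cons1 M G psi -> G psi.

Definition saturated (V : Type) (M : Nmatrix V) : Prop :=
  forall G, theory M G ->
    exists v, valuation M v /\ forall psi, desig M (v psi) <-> G psi.

(* The platypus Nmatrix <{0,1}, ., {1}>:
   dia(0,0) = {0}, dia(1,1) = {1}, dia(0,1) = dia(1,0) = {0,1}. *)
Definition platypus_dia (a b c : bool) : Prop := a = b -> c = a.

Lemma platypus_dia_nonempty : forall a b, exists c, platypus_dia a b c.
Proof. by move=> a b; exists a. Qed.

Definition platypus : Nmatrix bool :=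
  {| dia := platypus_dia; dia_nonempty := platypus_dia_nonempty;
     desig := fun b => b = true |}.

Definition cons_platypus (G : fset) (psi : Fm) : Prop := cons1 platypus G psi.

(* Main.v *)
Require Import Defs.
From mathcomp Require Import all_boot.
From Stdlib Require Import ClassicalEpsilon.

Section Aux.
Variables (V : finType) (M : Nmatrix V).

Definition pickdia (a b : V) : V :=
  proj1_sig (constructive_indefinite_description _ (dia_nonempty M a b)).

Lemma pickdiaP a b : dia M a b (pickdia a b).
Proof. exact: proj2_sig (constructive_indefinite_description _ (dia_nonempty M a b)). Qed.

Fixpoint wv (x z : V) (f : Fm) : V :=
  match f with
  | Var _ => x
  | Dia a b => let wa := wv x z a in let wb := wv x z b in
      if (wa == x) && (wb == x) then z else pickdia wa wb
  end.

Lemma wv_val x z : dia M x x z -> valuation M (wv x z).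
Proof.
move=> H a b /=.
case: eqP => [->|_]; case: eqP => [->|_] //=; exact: pickdiaP.
Qed.
End Aux.

Theorem proposition5 :
  ~ exists (V : finType) (M : Nmatrix V),
      saturated M /\
      (forall (G : fset) (psi : Fm), cons1 M G psi <-> cons_platypus G psi).
Proof.
move=> [V [M [Hsat Heq]]].
(* key rule: p<>p |- p *)
have key : forall x z, dia M x x z -> desig M z -> desig M x.
  move=> x z Hz Dz.
  have H1 : cons1 M (fun g => g = Dia (Var 0) (Var 0)) (Var 0).
    apply/Heq => u Hu Hg.
    have := Hu (Var 0) (Var 0); rewrite /platypus_dia /= => Hd.
    by rewrite -(Hd erefl); apply: Hg.
  have := H1 (@wv V M x z) (@wv_val V M x z Hz) => /=.
  by apply => g ->; rewrite /= !eqxx.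
set n := #|V|.
pose G0 : fset := fun g => exists i j, i < n.+1 /\ j < n.+1 /\ i <> j /\ g = Dia (Var i) (Var j).
pose T : fset := cons_platypus G0.
have thT : theory M T.
  move=> psi /Heq Hp u Hu HG.
  apply: Hp => // g Tg; exact: Tg.
have [v [Hv HvT]] := Hsat T thT.
have notv : forall i, ~ desig M (v (Var i)).
  move=> i /HvT Ti.
  pose fix u (f : Fm) : bool := match f with Var m => m != i | Dia a b => u a || u b end.
  have Hu : valuation platypus u.
    by move=> a b /=; rewrite /platypus_dia => ->; rewrite orbb.
  have := Ti u Hu; rewrite /= eqxx => H; suff : false = true by [].
  apply: H => g [a [b [_ [_ [ab ->]]]]] /=.
  case: eqP => [ai|] //=; case: eqP => //= bi.
  by case: ab; rewrite ai bi.
have inj : injective (fun i : 'I_n.+1 => v (Var i)).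
  move=> i j /= Hij; case: (eqVneq i j) => // ne; exfalso.
  apply: (notv i); apply: (key _ (v (Dia (Var i) (Var j)))).
    by have := Hv (Var i) (Var j); rewrite Hij.
  apply/HvT => u Hu HG; apply: HG.
  exists i, j; do 3!split => //; by move/val_inj/eqP; rewrite (negbTE ne).
have := leq_card _ inj; by rewrite card_ord ltnn.
Qed.
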